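(* (i) For all integers $j\geq 3$, $R_1^{\mathcal{BIP}}(3,j)=j$. (ii) For all integers $i\geq 5$ and $j\geq 3$, $R_1^{\mathcal{BIP}}(i,j)=2j-1$. Here $\mathcal{BIP}$ is the class of bipartite graphs.
   Context: All graphs are finite and simple. For a graph $G$ and a nonnegative integer $k$, a $k$-sparse $j$-set is a set of $j$ vertices of $G$ inducing a subgraph of maximum degree at most $k$; a $k$-dense $i$-set is a set of $i$ vertices of $G$ that is $k$-sparse in the complement of $G$. For a graph class $\mathcal{G}$, $R_k^{\mathcal{G}}(i,j)$ is the smallest natural number $n$ such that every graph on $n$ vertices in $\mathcal{G}$ has either a $k$-dense $i$-set or a $k$-sparse $j$-set. *)

(* Defs.v *)
From mathcomp Require Import all_boot.
Set Implicit Arguments. Unset Strict Implicit. Unset Printing Implicit Defensive.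

Definition simple_graph (n : nat) (e : rel 'I_n) : Prop :=
  symmetric e /\ irreflexive e.

Definition graph_class := forall n : nat, rel 'I_n -> Prop.

Definition bipartite : graph_class :=
  fun n e => exists c : 'I_n -> bool, forall x y, e x y -> c x != c y.

Definition k_sparse (n : nat) (e : rel 'I_n) (k : nat) (S : {set 'I_n}) : Prop :=
  forall x, x \in S -> #|[set y in S | e x y]| <= k.

Definition compl_rel (n : nat) (e : rel 'I_n) : rel 'I_n :=
  fun x y => (x != y) && ~~ e x y.

Definition k_dense (n : nat) (e : rel 'I_n) (k : nat) (S : {set 'I_n}) : Prop :=
  k_sparse (compl_rel e) k S.

Definition ramsey_prop (G : graph_class) (k i j n : nat) : Prop :=
  forall e : rel 'I_n, simple_graph e -> G n e ->
    (exists S : {set 'I_n}, #|S| = i /\ k_dense e k S) \/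
    (exists S : {set 'I_n}, #|S| = j /\ k_sparse e k S).

Definition is_ramsey_number (G : graph_class) (k i j r : nat) : Prop :=
  ramsey_prop G k i j r /\ forall m, m < r -> ~ ramsey_prop G k i j m.

(* Main.v *)
Require Import Defs.
From mathcomp Require Import all_boot.
From mathcomp Require Import zify.

Lemma subset_of_card (T : finType) (A : {set T}) n :
  n <= #|A| -> exists S : {set T}, #|S| = n /\ S \subset A.
Proof.
move=> /card_geqP [s [us ss sA]].
exists [set x in s]; split.
  by rewrite cardsE; move/card_uniqP: us => ->.
by apply/subsetP => x; rewrite inE => /sA.
Qed.

Lemma card_range m (S : {set 'I_m}) a b :
  (forall x, x \in S -> a <= x < b) -> #|S| <= b - a.
Proof.
move=> H.
rewrite cardE -(size_map val) -(size_iota a (b - a)).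
apply: uniq_leq_size.
  by rewrite (map_inj_uniq val_inj) enum_uniq.
move=> y /mapP [x]; rewrite mem_enum => /H xS ->.
rewrite mem_iota; case/andP: xS => h1 h2; rewrite h1 /=; rewrite subnKC //; exact: leq_trans h1 (ltnW h2).
Qed.

Lemma dense_le4 n (e : rel 'I_n) (S : {set 'I_n}) :
  bipartite e -> k_dense e 1 S -> #|S| <= 4.
Proof.
move=> [c hc] hd.
have side : forall b, #|[set x in S | c x == b]| <= 2.
  move=> b; rewrite leqNgt; apply/negP => h3.
  have [x xA] : exists x, x \in [set x in S | c x == b].
    by apply/set0Pn; rewrite -card_gt0; apply: leq_trans h3.
  have hx := xA; rewrite inE in hx; case/andP: hx => xS /eqP cx.
  have := hd x xS.
  have sub : [set x in S | c x == b] :\ x \subset [set y in S | compl_rel e x y].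
    apply/subsetP => y; rewrite !inE => /andP [yx /andP [yS /eqP cy]].
    rewrite yS /compl_rel eq_sym yx /=; apply/negP => exy.
    by have := hc _ _ exy; rewrite cx cy eqxx.
  have := subset_leq_card sub.
  move: h3; rewrite (cardsD1 x) xA /=; lia.
have := cardsID [set x | c x] S.
have := side true; have := side false.
have E1 : S :&: [set x | c x] = [set x in S | c x == true].
  by apply/setP => x; rewrite !inE; case: (c x); rewrite ?andbT ?andbF.
have E2 : S :\: [set x | c x] = [set x in S | c x == false].
  by apply/setP => x; rewrite !inE; case: (c x); rewrite ?andbT ?andbF.
rewrite E1 E2 => h1 h2 h3; rewrite -h3; exact: (leq_add h2 h1).
Qed.

Lemma empty_no_dense3 m (S : {set 'I_m}) :
  #|S| = 3 -> ~ k_dense (fun _ _ : 'I_m => false) 1 S.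
Proof.
move=> h3 hd.
have [x xS] : exists x, x \in S by apply/set0Pn; rewrite -card_gt0 h3.
have := hd x xS.
have -> : [set y in S | compl_rel (fun _ _ : 'I_m => false) x y] = S :\ x.
  by apply/setP => y; rewrite !inE /compl_rel /= andbT eq_sym andbC.
by move: h3; rewrite (cardsD1 x) xS /=; lia.
Qed.

Theorem theorem5p2 :
  (forall j : nat, 3 <= j -> is_ramsey_number bipartite 1 3 j j) /\
  (forall i j : nat, 5 <= i -> 3 <= j -> is_ramsey_number bipartite 1 i j (2 * j - 1)).
Proof.
split.
- move=> j hj; split.
  + move=> e [se ie] _.
    case: (boolP [forall x, #|[set y in [set: 'I_j] | e x y]| <= 1]) => hall.
      right; exists [set: 'I_j]; split; first by rewrite cardsT card_ord.
      by move=> x _; move/forallP: hall; apply.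
    left; move/forallPn: hall => [x]; rewrite -ltnNge => /card_gt1P [y [z [yN zN yz]]].
    rewrite !inE /= in yN zN.
    have xy : x != y by apply/eqP => exy; move: yN; rewrite exy ie.
    have xz : x != z by apply/eqP => exy; move: zN; rewrite exy ie.
    exists [set x; y; z]; split.
      by rewrite setUC cardsU1 cards2 !inE xy (eq_sym z x) (eq_sym z y) (negbTE xz) (negbTE yz).
    move=> w; rewrite !inE => hw.
    have one : forall w a, [set v in [set x; y; z] | compl_rel e w v] \subset [set a] ->
        #|[set v in [set x; y; z] | compl_rel e w v]| <= 1.
      by move=> w0 a /subset_leq_card; rewrite cards1.
    case/orP: hw => [/orP [] | ] /eqP ->.
    * apply: (one _ x); apply/subsetP => v; rewrite !inE /compl_rel => /andP [hv]; move: hv.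
      by case/orP => [/orP [] | ] /eqP ->; rewrite ?eqxx ?yN ?zN ?andbF.
    * apply: (one _ z); apply/subsetP => v; rewrite !inE /compl_rel => /andP [hv]; move: hv.
      by case/orP => [/orP [] | ] /eqP ->; rewrite ?eqxx ?(se y x) ?yN ?andbF.
    * apply: (one _ y); apply/subsetP => v; rewrite !inE /compl_rel => /andP [hv]; move: hv.
      by case/orP => [/orP [] | ] /eqP ->; rewrite ?eqxx ?(se z x) ?zN ?andbF.
  + move=> m hm hr.
    have := hr (fun _ _ => false).
    case.
    * by split.
    * by exists (fun _ => true).
    * case=> S [h3 hd]; have := @empty_no_dense3 m S h3. by move=> H; exact (H hd).
    * case=> S [hS _]; have := max_card S; rewrite card_ord hS; lia.
- move=> i j hi hj; split.
  + move=> e [se ie] [c hc]; right.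
    have := cardsID [set x | c x] [set: 'I_(2 * j - 1)].
    rewrite cardsT card_ord => hsum.
    have [A [hA indep]] : exists A : {set 'I_(2 * j - 1)}, j <= #|A| /\
        forall x y, x \in A -> y \in A -> ~~ e x y.
      case: (leqP j #|[set: 'I_(2 * j - 1)] :&: [set x | c x]|) => h.
        exists ([set: 'I_(2 * j - 1)] :&: [set x | c x]); split => // x y.
        rewrite !inE /= => cx cy; apply/negP => /hc; by rewrite cx cy.
      exists ([set: 'I_(2 * j - 1)] :\: [set x | c x]); split; first by move: h hsum; move: (#|_ :&: _|) (#|_ :\: _|) => a b; lia.
      move=> x y; rewrite !inE /= !andbT => cx cy; apply/negP => /hc.
      by move: cx cy; case: (c x); case: (c y).
    have [S [hS sub]] := @subset_of_card _ A j hA.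
    exists S; split => // x xS.
    have -> : [set y in S | e x y] = set0.
      apply/setP => y; rewrite !inE; apply/negP => /andP [yS exy].
      by move: (indep x y (subsetP sub x xS) (subsetP sub y yS)); rewrite exy.
    by rewrite cards0.
  + move=> m hm hr.
    pose h := m./2.
    pose e := fun x y : 'I_m => (x < h) != (y < h).
    have := hr e; case.
    * split; first by move=> x y; rewrite /e eq_sym.
      by move=> x; rewrite /e eqxx.
    * by exists (fun x : 'I_m => x < h) => x y.
    * case=> S [hS hd].
      have hb : bipartite e by exists (fun x : 'I_m => x < h) => x y.
      have := @dense_le4 m e S hb hd.
      lia.
    * case=> S [hS hsp].
      set A := [set x in S | x < h]; set B := [set x in S | ~~ (x < h)].
      have hAB : #|A| + #|B| = j.
        rewrite -hS -(cardsID [set x : 'I_m | x < h] S).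
        have -> : A = S :&: [set x : 'I_m | x < h] by apply/setP => x; rewrite !inE.
        have -> : B = S :\: [set x : 'I_m | x < h] by apply/setP => x; rewrite !inE andbC.
        done.
      have cA : #|A| <= h - 0.
        by apply: card_range => x; rewrite inE => /andP [_ ->].
      have cB : #|B| <= m - h.
        apply: card_range => x; rewrite inE => /andP [_ hx]; rewrite ltn_ord andbT.
        by rewrite leqNgt.
      have hmj : m - h <= j - 1 by rewrite /h; move: hm; clear; lia.
      have hhj : h <= j - 1 by rewrite /h; move: hm; clear; lia.
      have [x xA] : exists x, x \in A by apply/set0Pn; rewrite -card_gt0; lia.
      have [y yB] : exists y, y \in B by apply/set0Pn; rewrite -card_gt0; lia.
      have hx := xA; rewrite inE in hx; case/andP: hx => xS xh.
      have hy := yB; rewrite inE in hy; case/andP: hy => yS yh.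
      have s1 : B \subset [set z in S | e x z].
        by apply/subsetP => z; rewrite !inE /e xh => /andP [-> ->].
      have s2 : A \subset [set z in S | e y z].
        by apply/subsetP => z; rewrite !inE /e (negbTE yh) => /andP [-> ->].
      have := subset_leq_card s1; have := hsp x xS.
      have := subset_leq_card s2; have := hsp y yS.
      lia.
Qed.
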